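(* For every $\varepsilon>0$ there exists $n_0$ such that for all $n\ge n_0$ the following holds. Let $\mathcal F\subseteq 2^{[n]}$ be a family all of whose sets have size in $[n/2-n^{2/3},\,n/2+n^{2/3}]$. If for every $F\in\mathcal F$ we have (i) $\nabla^1_{\mathcal F}(F)\le\varepsilon n$ and (ii) $\nabla^j_{\mathcal F}(F)\le\varepsilon n^2$ for all $j\ge2$, then $|\mathcal F|\le(1+15\varepsilon)\binom{n}{\lfloor n/2\rfloor}$.
   Context: $\nabla^j_{\mathcal F}(F):=|\{G\in\mathcal F:\ F\subseteq G,\ |G|=|F|+j\}|$. *)

(* Defs.v *)
From mathcomp Require Import all_boot all_order all_algebra.
Set Implicit Arguments. Unset Strict Implicit. Unset Printing Implicit Defensive.

Definition nabla (n : nat) (F : {set {set 'I_n}}) (j : nat) (S : {set 'I_n}) : nat :=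
  #|[set G in F | (S \subset G) && (#|G| == #|S| + j)%N]|.

(* Main.v *)
Require Import Defs.
From mathcomp Require Import all_boot all_order all_algebra.
From mathcomp Require Import reals.
From mathcomp Require Import zify lra.
Set Implicit Arguments. Unset Strict Implicit. Unset Printing Implicit Defensive.
Import Order.TTheory GRing.Theory Num.Theory.
Local Open Scope ring_scope.


Definition pp (R : numFieldType) n (H S : {set 'I_n}) : R :=
  ('C(n - #|H|, #|S| - #|H|))%:R^-1.
Arguments pp {R n} H S.

Fixpoint uk (R : numFieldType) n (F : {set {set 'I_n}}) (k : nat) (S : {set 'I_n}) : R :=
  match k with
  | 0 => (S == set0)%:R
  | k'.+1 => (n - k')%:R^-1 *
      \sum_(x in S) (if S :\ x \in F then 0 else @uk R n F k' (S :\ x))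
  end.
Arguments uk {R n} F k S.

Definition uu (R : numFieldType) n (F : {set {set 'I_n}}) (S : {set 'I_n}) : R := uk F #|S| S.
Arguments uu {R n} F S.

Lemma uk_ge0 (R : numFieldType) n (F : {set {set 'I_n}}) k (S : {set 'I_n}) : 0 <= (uk F k S : R).
Proof.
elim: k S => [|k IH] S /=; first by rewrite ler0n.
apply: mulr_ge0; first by rewrite invr_ge0 ler0n.
by apply: sumr_ge0 => x _; case: ifP => // _; apply: IH.
Qed.

Lemma uu_ge0 (R : numFieldType) n (F : {set {set 'I_n}}) (S : {set 'I_n}) : 0 <= (uu F S : R).
Proof. exact: uk_ge0. Qed.

Lemma card_le_n n (S : {set 'I_n}) : (#|S| <= n)%N.
Proof. by rewrite -[X in (_ <= X)%N]card_ord max_card. Qed.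

Lemma uuS (R : numFieldType) n (F : {set {set 'I_n}}) (S : {set 'I_n}) k : #|S| = k.+1 ->
  (uu F S : R) = (n - k)%:R^-1 *
      \sum_(x in S) (if S :\ x \in F then 0 else uu F (S :\ x)).
Proof.
move=> cS; rewrite /uu cS /=; congr (_ * _); apply: eq_bigr => x xS.
by have := cardsD1 x S; rewrite xS cS add1n => -[<-].
Qed.

Lemma natr_div_eq (R : numFieldType) a b c d : (0 < b)%N -> (0 < d)%N ->
  (a * d = c * b)%N -> a%:R / b%:R = c%:R / d%:R :> R.
Proof.
move=> b0 d0 E; apply/eqP; rewrite eqr_div ?pnatr_eq0 -?lt0n // -!natrM.
by rewrite E.
Qed.

Lemma p_step (R : numFieldType) n (H S : {set 'I_n}) k : H \proper S -> #|S| = k.+1 ->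
  (n - k)%:R * (pp H S : R) = \sum_(x in S :\: H) pp H (S :\ x).
Proof.
move=> HS cS.
have kn : (k < n)%N by rewrite -cS card_le_n.
have hk : (#|H| <= k)%N by move: (proper_card HS); rewrite cS.
have sHS : H \subset S by case/andP: HS.
have -> : \sum_(x in S :\: H) (pp H (S :\ x) : R) = \sum_(x in S :\: H) ('C(n - #|H|, k - #|H|))%:R^-1.
  apply: eq_bigr => x; rewrite inE => /andP [xH xS].
  by rewrite /pp; have := cardsD1 x S; rewrite xS cS add1n => -[<-].
rewrite sumr_const cardsD (setIidPr sHS) cS /pp.
have E := mul_bin_left (n - #|H|) (k - #|H|).
have e1 : ((k - #|H|).+1 = k.+1 - #|H|)%N by rewrite subSn.
have e2 : (n - #|H| - (k - #|H|) = n - k)%N by rewrite subnBA // subnK // (leq_trans hk) // ltnW.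
rewrite e1 e2 in E.
have c1 : (0 < 'C(n - #|H|, k.+1 - #|H|))%N by rewrite bin_gt0 leq_sub2r.
have c0 : (0 < 'C(n - #|H|, k - #|H|))%N by rewrite bin_gt0 leq_sub2r // ltnW.
rewrite cS -[_ *+ (k.+1 - #|H|)]mulr_natl; apply: natr_div_eq => //.

Qed.

Lemma split_sub (R : numFieldType) n (F : {set {set 'I_n}}) (A : {set 'I_n})
  (f : {set 'I_n} -> R) :
  \sum_(H in F | H \subset A) f H =
  \sum_(H in F | H \proper A) f H + (if A \in F then f A else 0).
Proof.
rewrite (bigID (fun H => H == A)) /= addrC; congr (_ + _).
  apply: eq_bigl => H; rewrite properEneq.
  by case: (H \in F); case: (H == A); case: (H \subset A).
case: ifP => AF.
  apply: big_pred1 => H /=; case: eqP => [->|]; first by rewrite AF subxx.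
  by rewrite andbF.
apply: big_pred0 => H /=; case: eqP => [->|]; first by rewrite AF.
by rewrite andbF.
Qed.

Lemma dsum (R : numFieldType) n (F : {set {set 'I_n}}) (S : {set 'I_n})
  (g : {set 'I_n} -> 'I_n -> R) :
  \sum_(x in S) \sum_(H in F | H \subset S :\ x) g H x =
  \sum_(H in F | H \proper S) \sum_(x in S :\: H) g H x.
Proof.
rewrite (exchange_big_dep (fun H => (H \in F) && (H \proper S))) /=.
  apply: eq_bigr => H /andP [HF HS]; apply: eq_bigl => x.
  rewrite subsetD1 inE HF (proper_sub HS) /=.
  by case: (x \in S); case: (x \in H).
move=> x H xS /andP [HF HSx]; rewrite HF /=.
exact: sub_proper_trans HSx (properD1 xS).
Qed.

Lemma keyB (R : numFieldType) n (F : {set {set 'I_n}}) (S : {set 'I_n}) :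
  (pp set0 S : R) = uu F S + \sum_(H in F | H \proper S) uu F H * pp H S.
Proof.
move: {2}#|S| (erefl #|S|) => k; elim: k S => [|k IH] S cS.
  have -> := cards0_eq cS.
  rewrite /pp /uu cards0 /= eqxx bin0 invr1 big1 ?addr0 // => H /andP [_].
  by rewrite properEcard cards0 ltn0 andbF.
have kn : (k < n)%N by rewrite -cS card_le_n.
have nk : (n - k)%:R != 0 :> R by rewrite pnatr_eq0 subn_eq0 -ltnNge.
apply: (mulfI nk).
have S0 : set0 \proper S by rewrite proper0 -cards_eq0 cS.
rewrite (@p_step R n set0 S k S0 cS) setD0 mulrDr (@uuS R n F S k cS) mulrA mulfV // mul1r mulr_sumr.
have -> : \sum_(x in S) (pp set0 (S :\ x) : R) =
  \sum_(x in S) ((if S :\ x \in F then 0 else uu F (S :\ x)) +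
     \sum_(H in F | H \subset S :\ x) uu F H * pp H (S :\ x)).
  apply: eq_bigr => x xS.
  have cSx : #|S :\ x| = k by have := cardsD1 x S; rewrite xS cS add1n => -[<-].
  have pAA : pp (S :\ x) (S :\ x) = 1 :> R by rewrite /pp subnn bin0 invr1.
  rewrite (IH _ cSx) split_sub pAA mulr1.
  by case: ifP => _; rewrite ?add0r ?addr0 // addrC.
rewrite big_split /=; congr (_ + _).
rewrite dsum; apply: eq_bigr => H /andP [HF HS].
have cH : (#|H| <= k)%N by move: (proper_card HS); rewrite cS.
rewrite mulrCA (@p_step R n H S k HS cS) mulr_sumr; done.
Qed.

Lemma cardT_n n : #|[set: 'I_n]| = n.
Proof. by rewrite cardsT card_ord. Qed.

Lemma sum_u_le1 (R : numFieldType) n (F : {set {set 'I_n}}) :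
  \sum_(H in F) (uu F H : R) <= 1.
Proof.
have := @keyB R n F setT.
have -> : (pp set0 [set: 'I_n] : R) = 1 by rewrite /pp cardT_n cards0 !subn0 binn invr1.
have -> : \sum_(H in F | H \proper [set: 'I_n]) (uu F H : R) * pp H [set: 'I_n] =
          \sum_(H in F | H \proper [set: 'I_n]) uu F H.
  by apply: eq_bigr => H _; rewrite /pp cardT_n binn invr1 mulr1.
move=> E.
have -> : \sum_(H in F) (uu F H : R) = \sum_(H in F | H \subset [set: 'I_n]) uu F H.
  by apply: eq_bigl => H; rewrite subsetT andbT.
rewrite split_sub E addrC lerD2r.
by case: ifP => _; rewrite ?lexx ?uu_ge0.
Qed.

Lemma main_ineq (R : numFieldType) n (F : {set {set 'I_n}}) (c : R) : 0 <= c ->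
  (forall H, H \in F -> \sum_(G in F | H \proper G) (pp H G : R) <= c) ->
  \sum_(S in F) (pp set0 S : R) <= 1 + c.
Proof.
move=> c0 hY.
have -> : \sum_(S in F) (pp set0 S : R) = \sum_(S in F) uu F S +
   \sum_(S in F) \sum_(H in F | H \proper S) uu F H * pp H S.
  by rewrite -big_split; apply: eq_bigr => S _; rewrite (@keyB R n F).
rewrite (exchange_big_dep (fun H => H \in F)) /=; last by move=> ? ? ? /andP [].
have -> : \sum_(H in F) \sum_(S | (S \in F) && ((H \in F) && (H \proper S))) (uu F H : R) * pp H S
   = \sum_(H in F) uu F H * \sum_(S in F | H \proper S) pp H S.
  apply: eq_bigr => H HF; rewrite mulr_sumr; apply: eq_bigl => S.
  by rewrite HF.
apply: (@le_trans _ _ (\sum_(H in F) uu F H + \sum_(H in F) uu F H * c)).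
  apply: lerD => //; apply: ler_sum => H HF.
  by apply: ler_wpM2l; [exact: uu_ge0 | exact: hY].
rewrite -mulr_suml -[X in X + _]mulr1 -mulrDr mulrC.
apply: ler_piMr; first by rewrite addr_ge0 ?ler01.
exact: sum_u_le1.
Qed.


Lemma posz_exp (a k : nat) : (Posz a) ^+ k = Posz (a ^ k).
Proof. by rewrite -natz -natrX natz. Qed.

Lemma window_nat n s :
  `|(2 * s)%N%:Z - n%:Z| ^+ 3 <= (8 * n ^ 2)%N%:Z ->
  ((2 * s - n) ^ 3 <= 8 * n ^ 2)%N /\ ((n - 2 * s) ^ 3 <= 8 * n ^ 2)%N.
Proof.
case: (leqP n (2 * s)) => h.
  rewrite subzn // ger0_norm // posz_exp lez_nat => H; split; first exact: H.
  have -> : (n - 2 * s = 0)%N by apply/eqP; rewrite subn_eq0.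
  by rewrite exp0n.
rewrite distrC subzn; last exact: ltnW.
rewrite ger0_norm // posz_exp lez_nat => H; split; last exact: H.
have -> : (2 * s - n = 0)%N by apply/eqP; rewrite subn_eq0 ltnW.
by rewrite exp0n.
Qed.

Lemma window_K n d K : (0 < K)%N -> (8 * K ^ 3 <= n)%N -> (d ^ 3 <= 8 * n ^ 2)%N -> (K * d <= n)%N.
Proof.
move=> K0 hn hd; rewrite leqNgt; apply/negP => lt.
have h3 : (n ^ 3 < (K * d) ^ 3)%N by rewrite ltn_exp2r.
rewrite expnMn in h3.
have n0 : (0 < n)%N.
  apply: leq_trans hn; rewrite muln_gt0 expn_gt0 K0.
  done.
have h4 : (n * n ^ 2 < (8 * K ^ 3) * n ^ 2)%N.
  apply: (leq_trans h3).
  have -> : (8 * K ^ 3 * n ^ 2 = K ^ 3 * (8 * n ^ 2))%N.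
    by rewrite mulnCA mulnA.
  by rewrite leq_pmul2l // expn_gt0 K0.
have n2 : (0 < n ^ 2)%N by rewrite expn_gt0 n0.
move: h4; rewrite ltn_pmul2r // ltnNge hn.
done.
Qed.

Local Open Scope nat_scope.



Lemma bin_step m j : 2 * j < m -> 'C(m, j) <= 'C(m, j.+1).
Proof.
move=> h; have E := mul_bin_left m j.
rewrite -(@leq_pmul2l j.+1) // E; apply: leq_mul => //.
lia.
Qed.

Lemma bin_mono m i j : i <= j -> 2 * j <= m -> 'C(m, i) <= 'C(m, j).
Proof.
move=> ij; elim: j ij => [|j IH] ij hj.
  by rewrite leqn0 in ij; rewrite (eqP ij).
case: (ltngtP i j.+1) ij => // [lt|->] _ .
  apply: leq_trans (IH lt _) (bin_step _); lia.
done.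
Qed.

Lemma bin_le_half n k : 'C(n, k) <= 'C(n, n./2).
Proof.
have oh := odd_double_half n.
have ob : odd n <= 1 by case: (odd n).
case: (leqP k n./2) => hk.
  apply: bin_mono => //; lia.
case: (leqP k n) => kn; last by rewrite bin_small.
rewrite -bin_sub //; apply: bin_mono; lia.
Qed.

Local Open Scope ring_scope.


Lemma nat_pred_eq g h j : j != 0%N -> (h < g)%N && (g - h == j)%N = (g == h + j)%N.
Proof.
move=> j0; apply/idP/idP => [/andP [a /eqP b]|/eqP c].
  apply/eqP; lia.
apply/andP; split; [lia | apply/eqP; lia].
Qed.

Lemma Y_part (R : numFieldType) n (F : {set {set 'I_n}}) (H : {set 'I_n}) :
  \sum_(G in F | H \proper G) (pp H G : R) =
  \sum_(j < n.+1) (if (j : nat) == 0%N then 0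
      else (nabla F j H)%:R / ('C(n - #|H|, j))%:R).
Proof.
rewrite (partition_big (fun G : {set 'I_n} => (inord (#|G| - #|H|) : 'I_n.+1)) xpredT) //=.
apply: eq_bigr => j _.
have bnd : forall G : {set 'I_n}, (#|G| - #|H| < n.+1)%N.
  by move=> G; rewrite ltnS (leq_trans (leq_subr _ _)) // card_le_n.
rewrite (eq_bigr (fun _ => ('C(n - #|H|, j))%:R^-1)); last first.
  move=> G /andP [_ /eqP <-]; by rewrite /pp inordK.
rewrite sumr_const.
have ieq : forall x, (x < n.+1)%N -> ((inord x : 'I_n.+1) == j) = (x == j).
  by move=> x hx; rewrite -(inj_eq val_inj) /= inordK.
have [j0|j0] := eqVneq (j : nat) 0%N.
  rewrite [X in _ *+ X]eq_card0 ?mulr0n // => G /=.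
  rewrite !inE /= unfold_in /= ieq // j0 properEcard.
  by case: (G \in F); case: (H \subset G); rewrite //=; apply/negP => /andP [a /eqP b]; lia.
rewrite -[LHS]mulr_natl; congr (_ * _); apply/eqP; rewrite eqr_nat; apply/eqP.
rewrite /nabla; apply: eq_card => G; rewrite !inE /= unfold_in /= ieq // properEcard.
case: (G \in F); case: (H \subset G) => //=.
exact: nat_pred_eq.
Qed.


Lemma divle (R : realFieldType) (a b c d : R) :
  0 <= a -> a <= c -> 0 < d -> d <= b -> a / b <= c / d.
Proof.
move=> a0 ac d0 db; have b0 : 0 < b by apply: lt_le_trans db.
apply: ler_pM => //; first by rewrite invr_ge0 ltW.
by rewrite lef_pV2 ?posrE.
Qed.

Lemma tA (R : realFieldType) (N M : R) : 0 <= N -> 39*N <= 80*M -> 100 <= M -> N^+2 <= 5*M*(M-1).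
Proof. move=> *. nra. Qed.
Lemma tB (R : realFieldType) (N M : R) : 0 <= N -> 39*N <= 80*M -> 100 <= M -> 3 * N^+3 <= 40*M*(M-1)*(M-2).
Proof. move=> h1 h2 h3. have h4 : N <= 3 * M by lra. have h5: N^+2 <= 5*M*(M-1) by nra. nra. Qed.

Lemma final_real (R : realFieldType) (eps N M C2 C3 a1 a2 T : R) :
 0 < eps -> 0 <= N -> 39 * N <= 80 * M -> 100 <= M -> 2 * C2 = M * (M - 1) ->
 3 * C3 = (M - 2) * C2 -> 0 <= a1 -> a1 <= eps * N -> 0 <= a2 -> a2 <= eps * N ^+ 2 ->
 0 <= T -> 40 * T <= N ->
 a1 / M + (a2 / C2 + (eps * N ^+ 2 / C3) * T) <= 15 * eps.
Proof.
move=> e0 N0 NM M100 eC2 eC3 a10 a1N a20 a2N T0 TN.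
have M0 : 0 < M by lra.
have C20 : 0 < C2 by nra.
have C30 : 0 < C3 by nra.
have h1 : a1 / M <= 3 * eps.
  rewrite ler_pdivrMr //. 
  have : eps * N <= eps * (3 * M) by apply: ler_wpM2l; [exact: ltW | lra].
  lra.
have h2 : a2 / C2 <= 10 * eps.
  rewrite ler_pdivrMr //.
  have hA := @tA _ N M N0 NM M100.
  have : eps * N ^+ 2 <= eps * (5 * M * (M - 1)) by apply: ler_wpM2l; [exact: ltW | done].
  have : eps * (2 * C2) = eps * (M * (M - 1)) by rewrite eC2.
  lra.
have h3 : (eps * N ^+ 2 / C3) * T <= 2 * eps.
  rewrite mulrAC ler_pdivrMr //.
  have hB := @tB _ N M N0 NM M100.
  have hT : N ^+ 2 * T <= N ^+ 2 * (N / 40) by apply: ler_wpM2l; [exact: sqr_ge0 | lra].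
  have : eps * (N ^+ 2 * T) <= eps * (2 * C3).
    apply: ler_wpM2l; first exact: ltW. apply: (le_trans hT).
    have e3 : N ^+ 2 * (N / 40) = N ^+ 3 / 40 by rewrite (exprSr N 2) mulrA.
    rewrite e3.
    have e6 : M * (M - 1) * (M - 2) = 6 * C3.
      rewrite -eC2 -mulrA [C2 * _]mulrC -eC3; lra.
    have : 3 * N ^+ 3 <= 40 * (M * (M - 1) * (M - 2)) by move: hB; rewrite !mulrA.
    lra.
  rewrite mulrA; lra.
lra.
Qed.

Lemma Y_bound (R : realFieldType) n (F : {set {set 'I_n}}) (H : {set 'I_n}) (eps : R) :
  0 < eps -> (1000 <= n)%N ->
  (forall S, S \in F -> (80 * #|S| <= 41 * n)%N /\ (39 * n <= 80 * #|S|)%N) ->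
  H \in F ->
  (nabla F 1 H)%:R <= eps * n%:R ->
  (forall j, (2 <= j)%N -> (nabla F j H)%:R <= eps * n%:R ^+ 2) ->
  \sum_(G in F | H \proper G) (pp H G : R) <= 15 * eps.
Proof.
move=> e0 n1000 wind HF hn1 hnj.
have [wh1 wh2] := wind H HF.
have hm : (39 * n <= 80 * (n - #|H|))%N by lia.
have nab0 : forall j, (n < 40 * j)%N -> nabla F j H = 0%N.
  move=> j hj; apply/eqP; rewrite cards_eq0; apply/eqP/setP => G; rewrite !inE.
  apply/negP => /and3P [GF HG /eqP cG].
  have [wg1 wg2] := wind G GF; lia.
rewrite Y_part.
move: #|H| wh1 wh2 hm => h wh1 wh2 hm.
rewrite -(big_mkord xpredT (fun j => if j == 0%N then 0 else (nabla F j H)%:R / ('C(n - h, j))%:R)).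
rewrite big_ltn // big_ltn; last by lia.
rewrite big_ltn; last by lia.
rewrite /= add0r bin1.
set J := (n %/ 40)%N.
rewrite (big_cat_nat (n := J.+1)) /=; [|lia|lia].
rewrite [X in _ + (_ + (_ + X))]big_nat_cond [X in _ + (_ + (_ + X))]big1 ?addr0; last first.
  move=> j; rewrite /= ?andbT => /andP [a b]; rewrite nab0 ?mul0r; last by lia.
  by case: (j == 0%N).
have tail : \sum_(3 <= i < J.+1)
      (if i == 0%N then 0 else (nabla F i H)%:R / ('C(n - h, i))%:R)
    <= (eps * n%:R ^+ 2 / ('C(n - h, 3))%:R) *+ (J.+1 - 3) :> R.
  rewrite -sumr_const_nat big_nat_cond [X in _ <= X]big_nat_cond.
  apply: ler_sum => i /andP [/andP [a b] _].
  case: ifP => [/eqP e|_]; first by exfalso; lia.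
  apply: divle.
  - exact: ler0n.
  - by apply: hnj; lia.
  - by rewrite ltr0n bin_gt0; lia.
  - by rewrite ler_nat; apply: bin_mono; lia.
apply: le_trans (lerD (lexx _) (lerD (lexx _) tail)) _.
rewrite -[X in _ + (_ + X)]mulr_natr.
have e2 : (2 * 'C(n - h, 2) = (n - h) * (n - h - 1))%N.
  by rewrite (mul_bin_left (n - h) 1) bin1 mulnC.
have e3 : (3 * 'C(n - h, 3) = (n - h - 2) * 'C(n - h, 2))%N.
  by rewrite (mul_bin_left (n - h) 2).
apply: final_real => //.
- by rewrite -!natrM ler_nat.
- by rewrite ler_nat; lia.
- have := congr1 (fun x => x%:R : R) e2; rewrite /= !natrM (@natrB _ (n - h) 1); [done | lia].
- have := congr1 (fun x => x%:R : R) e3; rewrite /= !natrM (@natrB _ (n - h) 2); [done | lia].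
- by apply: hnj.
- by rewrite -natrM ler_nat; lia.
Qed.



(* Size window |S| in [n/2 - n^(2/3), n/2 + n^(2/3)] written exactly as
   |2|S| - n|^3 <= 8 n^2 (integer arithmetic). *)
Theorem lemma2p4 (R : realType) (eps : R) : 0 < eps ->
  exists n0 : nat, forall n : nat, (n0 <= n)%N ->
  forall F : {set {set 'I_n}},
    (forall S, S \in F -> `|(2 * #|S|)%:Z - n%:Z| ^+ 3 <= (8 * n ^ 2)%:Z) ->
    (forall S, S \in F -> (nabla F 1 S)%:R <= eps * n%:R) ->
    (forall S, S \in F -> forall j : nat, (2 <= j)%N ->
        (nabla F j S)%:R <= eps * (n%:R) ^+ 2) ->
    (#|F|%:R : R) <= (1 + 15 * eps) * ('C(n, n./2))%:R.
Proof.
move=> e0; exists (8 * 40 ^ 3)%N => n hn F hw h1 hj.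
have n1000 : (1000 <= n)%N by lia.
have wind : forall S, S \in F -> (80 * #|S| <= 41 * n)%N /\ (39 * n <= 80 * #|S|)%N.
  move=> S SF; have [a b] := window_nat (hw S SF).
  have a' := @window_K n _ 40 isT hn a.
  have b' := @window_K n _ 40 isT hn b.
  split; lia.
have Y : forall H, H \in F ->
    \sum_(G in F | H \proper G) (pp H G : R) <= 15 * eps.
  by move=> H HF; apply: Y_bound => //; [exact: h1 | exact: hj].
have M := @main_ineq R n F (15 * eps) (ltW (mulr_gt0 (ltr0n _ 15) e0)) Y.
have C0 : (0 < 'C(n, n./2))%N by rewrite bin_gt0 leq_half_double -addnn; lia.
rewrite -ler_pdivrMr ?ltr0n //.
apply: le_trans M.
rewrite -[X in X / _]mulr1 -mulrA mulr_natl -sumr_const.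
apply: ler_sum => S _.
rewrite mul1r /pp cards0 !subn0.
have c1 : (0 < 'C(n, #|S|))%N by rewrite bin_gt0 card_le_n.
by rewrite lef_pV2 ?posrE ?ltr0n // ler_nat bin_le_half.
Qed.
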